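(* Let $K\ge 2$, $N\ge 2K$ (allowing $N=\infty$), let $B$ be a fully simplified parameter set of size $K$, let $x$ be a causal sequence with $x[0]\neq0$ and $y=h[\cdot;B]*x$. Let $d(\cdot,\cdot)\ge 0$ be any function on pairs of length-$N$ vectors with $d(a,b)=0$ iff $a=b$, and define on ordered parameter vectors $\tilde B^{\mathrm{ord}}=((\tilde b_k,\tilde\beta_k))_{k=1}^K\in\mathbb{C}^{2K}$ the objective $\mathcal{L}(\tilde B^{\mathrm{ord}})=d\big((y[n])_{0\le n<N},((h[\cdot;\tilde B^{\mathrm{ord}}]*x)[n])_{0\le n<N}\big)$. Then for any ordering $B^{\mathrm{ord}}$ of $B$ and any non-identity permutation $\sigma$ of $\{1,\dots,K\}$, $\mathcal{L}(B^{\mathrm{ord}})=\mathcal{L}(\sigma(B^{\mathrm{ord}}))=0$ while $\mathcal{L}(\lambda B^{\mathrm{ord}}+(1-\lambda)\sigma(B^{\mathrm{ord}}))>0$ for every $0<\lambda<1$. In particular $\mathcal{L}$ is not convex on $\mathbb{C}^{2K}\cong\mathbb{R}^{4K}$.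
   Context: A parameter set is an unordered finite set $B=\{(b_k,\beta_k)\}_{k=1}^K$ with $b_k,\beta_k\in\mathbb{C}$; it is fully simplified if the poles are pairwise distinct and all coefficients are nonzero. For a list of pairs $((c_k,\gamma_k))_k$ the causal impulse response is $h[n]=\sum_k c_k\gamma_k^n$ for $n\ge0$, $0$ for $n<0$ ($0^0=1$). For an ordered vector $B^{\mathrm{ord}}=((b_k,\beta_k))_k$, $\sigma(B^{\mathrm{ord}})=((b_{\sigma(k)},\beta_{\sigma(k)}))_k$, and convex combinations are taken componentwise. Causal sequences vanish at negative indices and $(h*x)[n]=\sum_m h[m]x[n-m]$. *)

(* Defs.v *)
From HB Require Import structures.
From mathcomp Require Import all_boot all_order all_algebra all_fingroup.
From mathcomp Require Import reals.
From mathcomp Require Import complex.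
Set Implicit Arguments. Unset Strict Implicit. Unset Printing Implicit Defensive.
Import Order.TTheory GRing.Theory Num.Theory.
Local Open Scope ring_scope.

(* An ordered parameter vector ((b_k, beta_k))_{k<K}: b_k coefficient, beta_k pole. *)
Definition parvec (R : realType) (K : nat) := 'I_K -> (complex R * complex R).

(* Causal impulse response h[n] = sum_k c_k gamma_k^n for n >= 0 (0^0 = 1). *)
Definition impresp (R : realType) (K : nat) (B : parvec R K) (n : nat) : complex R :=
  \sum_(k < K) (B k).1 * (B k).2 ^+ n.

(* Convolution of causal sequences (indexed by nat, zero at negative indices):
   (h * x)[n] = sum_{m=0}^{n} h[m] x[n-m]. *)
Definition causal_conv (R : realType) (h x : nat -> complex R) (n : nat) : complex R :=
  \sum_(m < n.+1) h m * x (n - m)%N.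

Definition fully_simplified (R : realType) (K : nat) (B : parvec R K) : Prop :=
  injective (fun k => (B k).2) /\ (forall k, (B k).1 != 0).

Definition permute_par (R : realType) (K : nat) (s : 'S_K) (B : parvec R K) : parvec R K :=
  fun k => B (s k).

Definition convcomb (R : realType) (K : nat) (lam : R) (B1 B2 : parvec R K) : parvec R K :=
  fun k => ((Complex lam 0) * (B1 k).1 + (Complex (1 - lam) 0) * (B2 k).1,
            (Complex lam 0) * (B1 k).2 + (Complex (1 - lam) 0) * (B2 k).2).

(* Observation length N, possibly infinite: Some m = finite length m, None = infinity. *)
Definition lenN_le (a : nat) (N : option nat) : Prop :=
  match N with Some m => (a <= m)%N | None => True end.

Definition vecN (R : realType) (N : option nat) : Type :=
  match N with Some m => 'I_m -> complex R | None => nat -> complex R end.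

Definition window (R : realType) (N : option nat) (s : nat -> complex R) : vecN R N :=
  match N as N0 return vecN R N0 with
  | Some m => fun i : 'I_m => s (nat_of_ord i)
  | None => s
  end.

Definition objective (R : realType) (K : nat) (N : option nat)
  (d : vecN R N -> vecN R N -> R) (y x : nat -> complex R) (Bt : parvec R K) : R :=
  d (window N y) (window N (causal_conv (impresp Bt) x)).

Definition convex_on_par (R : realType) (K : nat) (L : parvec R K -> R) : Prop :=
  forall (u v : parvec R K) (lam : R), 0 <= lam <= 1 ->
    L (convcomb lam u v) <= lam * L u + (1 - lam) * L v.

(* Main.v *)
Require Import Defs.
From HB Require Import structures.
From mathcomp Require Import all_boot all_order all_algebra all_fingroup.
From mathcomp Require Import reals.
From mathcomp Require Import complex.
From mathcomp Require Import ring lra zify.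
From Stdlib Require Import FunctionalExtensionality.
Import Order.TTheory GRing.Theory Num.Theory.
Local Open Scope ring_scope.
Set Implicit Arguments.
Unset Strict Implicit.

Lemma cc_split (R : realType) (lam a1 b1 a2 b2 c1 c2 : R) :
  (Complex lam 0) * (Complex a1 b1) + (Complex (1 - lam) 0) * (Complex a2 b2) = Complex c1 c2 ->
  lam * a1 + (1 - lam) * a2 = c1 /\ lam * b1 + (1-lam) * b2 = c2.
Proof.
move=> H.
have := congr1 (@complex.Re R) H. have := congr1 (@complex.Im R) H. rewrite /=. move=> h1 h2.
split; [rewrite -h2| rewrite -h1]; ring.
Qed.

Lemma ext_eq (R : realType) (lam a1 a2 r: R) : 0 < lam < 1 -> a1 <= r -> a2 <= r ->
  lam*a1+(1-lam)*a2 = r -> a1 = r /\ a2 = r.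
Proof. move=> /andP[l0 l1] h1 h2 e. split; apply/eqP; rewrite eq_le; apply/andP; split => //; nra. Qed.

Lemma conv_sub (R : realType) (h h' x : nat -> complex R) n :
  causal_conv h x n - causal_conv h' x n = causal_conv (fun m => h m - h' m) x n.
Proof. by rewrite /causal_conv -sumrB; apply: eq_bigr => i _; rewrite mulrBl. Qed.

Lemma deconv (R : realType) (D x : nat -> complex R) M : x 0%N != 0 ->
  (forall n, (n < M)%N -> causal_conv D x n = 0) -> forall n, (n < M)%N -> D n = 0.
Proof.
move=> x0 H; elim/ltn_ind => n IH ltnM.
have := H n ltnM; rewrite /causal_conv big_ord_recr /= subnn big1 => [|i _].
  by rewrite add0r => /eqP; rewrite mulf_eq0 (negbTE x0) orbF => /eqP.
have hi := ltn_ord i.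
by rewrite IH ?mul0r // (ltn_trans hi ltnM).
Qed.

Lemma window_eq (R : realType) N (f g : nat -> complex R) M : lenN_le M N ->
  window N f = window N g -> forall n, (n < M)%N -> f n = g n.
Proof.
case: N => [m|] /= hM H n hn; last by rewrite H.
exact: (congr1 (fun F => F (Ordinal (leq_trans hn hM))) H).
Qed.

Lemma key (R : realType) K (B B' : parvec R K) (j : 'I_K) :
  (forall n, (n < 2*K)%N -> impresp B n = impresp B' n) ->
  (forall k, k != j -> (B k).2 != (B j).2) ->
  (forall i, (B' i).2 != (B j).2) -> (B j).1 = 0.
Proof.
move=> Heq Hk Hi.
set rs := [seq (B k).2 | k <- rem j (enum 'I_K)] ++ [seq (B' i).2 | i <- enum 'I_K].
set Q := \prod_(z <- rs) ('X - z%:P).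
have K0 : (0 < K)%N := leq_ltn_trans (leq0n j) (ltn_ord j).
have szQ : (size Q <= 2*K)%N.
  rewrite size_prod_XsubC size_cat !size_map size_rem ?mem_enum // size_enum_ord.
  by rewrite -enumT size_enum_ord; lia.
have E : forall z, Q.[z] = \sum_(m < 2*K) Q`_m * z ^+ m.
  by move=> z; apply: horner_coef_wide.
have S0 : \sum_(m < 2*K) Q`_m * (impresp B m - impresp B' m) = 0.
  by rewrite big1 // => m _; rewrite Heq ?subrr ?mulr0.
have S1 : \sum_(m < 2*K) Q`_m * (impresp B m - impresp B' m) =
   \sum_(k<K) (B k).1 * Q.[(B k).2] - \sum_(i<K) (B' i).1 * Q.[(B' i).2].
  rewrite /impresp.
  under eq_bigr => m _ do rewrite mulrBr !mulr_sumr.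
  rewrite sumrB exchange_big [X in _ - X]exchange_big /=.
  congr (_ - _); apply: eq_bigr => k _; rewrite E mulr_sumr;
    apply: eq_bigr => m _; by rewrite mulrCA.
have Qz : forall z, z \in rs -> Q.[z] = 0.
  by move=> z zin; have := root_prod_XsubC rs z; rewrite zin rootE => /eqP.
have Qj : Q.[(B j).2] != 0.
  rewrite -rootE root_prod_XsubC mem_cat negb_or; apply/andP; split.
    apply/mapP => -[k kin e]; move: kin; rewrite mem_rem_uniq ?enum_uniq //.
    by rewrite inE => /andP[kj _]; move: (Hk k kj); rewrite e eqxx.
  by apply/mapP => -[i _ e]; move: (Hi i); rewrite e eqxx.
move: S1; rewrite S0 (bigD1 j) //= big1 => [|k kj].
  rewrite big1 => [|i _]; last by rewrite Qz ?mulr0 // mem_cat; apply/orP; right; apply: map_f; rewrite mem_enum.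
  rewrite addr0 subr0 => /esym /eqP; rewrite mulf_eq0 (negbTE Qj) orbF => /eqP //.
rewrite Qz ?mulr0 // mem_cat; apply/orP; left; apply: map_f.
by rewrite mem_rem_uniq ?enum_uniq // inE kj mem_enum.
Qed.

Lemma lexmax (R : realType) K (P : pred 'I_K) (f : 'I_K -> complex R) k0 : P k0 ->
  exists2 j, P j & forall k, P k -> complex.Re (f k) <= complex.Re (f j) /\
     (complex.Re (f k) = complex.Re (f j) -> complex.Im (f k) <= complex.Im (f j)).
Proof.
move=> Pk0.
case: (@arg_maxP _ R _ k0 P (fun k => complex.Re (f k)) Pk0) => j1 Pj1 H1.
pose P2 := [pred k | P k && (complex.Re (f k) == complex.Re (f j1))].
have P2j1 : P2 j1 by rewrite /= Pj1 eqxx.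
case: (@arg_maxP _ R _ j1 P2 (fun k => complex.Im (f k)) P2j1) => j /andP[Pj /eqP ej] H2.
exists j => // k Pk; rewrite ej; split; first exact: H1.
by move=> e; apply: H2; rewrite /= Pk e eqxx.
Qed.

Unset Implicit Arguments.
Set Strict Implicit.

Theorem mainTheorem7 (R : realType) (K : nat) (N : option nat)
  (B : parvec R K) (x : nat -> complex R)
  (d : vecN R N -> vecN R N -> R) :
  (2 <= K)%N ->
  lenN_le (2 * K)%N N ->
  fully_simplified B ->
  x 0%N != 0 ->
  (forall a b, 0 <= d a b) ->
  (forall a b, d a b = 0 <-> a = b) ->
  forall s : 'S_K, s != 1%g ->
  let y := causal_conv (impresp B) x in
  let L := objective d y x in
  [/\ L B = 0, L (permute_par s B) = 0,
      (forall lam : R, 0 < lam < 1 -> 0 < L (convcomb lam B (permute_par s B)))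
    & ~ convex_on_par L].
Proof.
move=> K2 hN [inj b0] x0 dge deq s s1 y L.
have Hperm : impresp (permute_par s B) = impresp B.
  apply: functional_extensionality => n; rewrite /impresp /permute_par.
  by rewrite [RHS](reindex_inj (@perm_inj _ s)).
have LB : L B = 0 by apply/deq.
have LsB : L (permute_par s B) = 0 by rewrite /L /objective Hperm; apply/deq.
have Hpos : forall lam : R, 0 < lam < 1 -> 0 < L (convcomb lam B (permute_par s B)).
  move=> lam hlam; set B' := convcomb _ _ _.
  rewrite lt_def dge andbT; apply/eqP => /deq Hw.
  have Hc := window_eq hN Hw.
  have Hh : forall n, (n < 2*K)%N -> impresp B n = impresp B' n.
    move=> n hn; apply/eqP; rewrite -subr_eq0; apply/eqP; move: n hn.
    by apply: (deconv x0) => n hn; rewrite -conv_sub; have := Hc n hn; rewrite /y => ->; rewrite subrr.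
  have [k0 hk0] : exists k0, s k0 != k0.
    case: (pickP (fun k => s k != k)) => [k hk|none]; first by exists k.
    move/eqP: s1; case; apply/permP => k; rewrite perm1.
    by move: (none k) => /negbFE/eqP.
  have [j Pj Hj] := @lexmax R K (fun k => s k != k) (fun k => (B k).2) k0 hk0.
  apply: (negP (b0 j)); apply/eqP; apply: (key Hh).
    by move=> k kj; apply: contra kj => /eqP e; apply/eqP; apply: inj.
  move=> i; apply/negP => /eqP e.
  move: e; rewrite /B' /convcomb /permute_par /=.
  have Hj1 := Hj i; have Hj2 := Hj (s i).
  case E1: (B i).2 Hj1 => [a1 b1] Hj1.
  case E2: (B (s i)).2 Hj2 => [a2 b2] Hj2.
  case E3: (B j).2 Hj Hj1 Hj2 => [c1 c2] Hj Hj1 Hj2.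
  move=> /cc_split [ea eb].
  case: (eqVneq (s i) i) => [si|si].
    move: E2; rewrite si E1 => -[ea2 eb2]; rewrite -ea2 -eb2 in ea eb.
    have : (B i).2 = (B j).2.
      by rewrite E1 E3 -ea -eb; congr Complex; ring.
    move/inj => ij; by move: Pj; rewrite -ij si eqxx.
  have ssi : s (s i) != s i.
    by apply: contra si => /eqP h; apply/eqP; exact: perm_inj h.
  have [h1 h2] := Hj1 si; have [h3 h4] := Hj2 ssi; rewrite /= in h1 h2 h3 h4.
  have [ra1 ra2] := ext_eq hlam h1 h3 ea.
  have [rb1 rb2] := ext_eq hlam (h2 ra1) (h4 ra2) eb.
  have : (B i).2 = (B (s i)).2 by rewrite E1 E2 ra1 ra2 rb1 rb2.
  by move/inj => h; rewrite -h eqxx in si.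
split => // C.
have h := C B (permute_par s B) (1/2).
have := Hpos (1/2).
rewrite LB LsB !mulr0 addr0 in h.
have hh : 0 <= (1/2 : R) <= 1 by apply/andP; split; lra.
have hh' : 0 < (1/2 : R) < 1 by apply/andP; split; lra.
by move=> /(_ hh'); rewrite ltNge (h hh).
Qed.
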